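(* The $\Bbbk$-linear monoidal functor $\mathcal{AW}\to\mathcal{AS}$ which is the identity on generating objects $a\ge1$ and sends the generating morphisms $M_{a,b},S_{a,b},X_{a,b},\omega_a$ of $\mathcal{AW}$ to the morphisms with the same names in $\mathcal{AS}$ is faithful and full; that is, $\mathcal{AW}$ is a full subcategory of $\mathcal{AS}$.
   Context: Let $\Bbbk$ be a commutative ring with $1$. The affine Schur category $\mathcal{AS}$ is the strict $\Bbbk$-linear monoidal category defined as follows. Generating objects: the integers $a\ge1$ (black strands of thickness $a$) and the elements $u\in\Bbbk$ (red strands labelled $u$); objects are finite words in these, tensor product being concatenation. Generating morphisms, for $a,b\ge1$, $u\in\Bbbk$: merge $M_{a,b}:(a,b)\to(a+b)$, split $S_{a,b}:(a+b)\to(a,b)$, crossing $X_{a,b}:(a,b)\to(b,a)$, dot $\omega_a:(a)\to(a)$, traverse-up $U_{a,u}:(a,u)\to(u,a)$, traverse-down $D_{u,a}:(u,a)\to(a,u)$. Conventions: a black strand of thickness $0$ is the unit object and any merge, split or crossing involving a thickness-$0$ strand is an identity. Derived morphisms: $\omega_{a,0}:=1_a$; $\omega_{a,r}:=M_{r,a-r}(\omega_r\otimes1_{a-r})S_{r,a-r}$ for $1\le r\le a$; $\omega_{a,r}:=0$ if $r<0$ or $r>a$; $S^{(a)},M^{(a)}$ iterated splits/merges between $(a)$ and $(1,\dots,1)$; $g_r(u):=\sum_{i=0}^{r}(-1)^i\big(\prod_{j=0}^{i-1}(u+j)\big)\omega_{r,r-i}$. Defining relations, for all $a,b,c,d,r\ge1$,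 $u\in\Bbbk$: (R1) $M_{a+b,c}(M_{a,b}\otimes1_c)=M_{a,b+c}(1_a\otimes M_{b,c})$, $(S_{a,b}\otimes1_c)S_{a+b,c}=(1_a\otimes S_{b,c})S_{a,b+c}$; (R2) if $a+c=b+d$: $S_{b,d}M_{a,c}=\sum(M_{s,c-t}\otimes M_{a-s,t})(1_s\otimes X_{a-s,c-t}\otimes1_t)(S_{s,a-s}\otimes S_{c-t,t})$ over $0\le s\le\min(a,b)$, $0\le t\le\min(c,d)$, $t-s=d-a$; (R3) $M_{a,b}S_{a,b}=\binom{a+b}{a}1_{a+b}$; (R4) $(\omega_b\otimes1_a)X_{a,b}=\sum_{t=0}^{\min(a,b)}t!\,(M_{t,b-t}\otimes M_{a-t,t})(1_t\otimes X_{a-t,b-t}\otimes1_t)(1_t\otimes1_{a-t}\otimes\omega_{b-t}\otimes1_t)(S_{t,a-t}\otimes S_{b-t,t})$ and $X_{b,a}(\omega_b\otimes1_a)=\sum_{t=0}^{\min(a,b)}t!\,(M_{t,a-t}\otimes M_{b-t,t})(1_t\otimes1_{a-t}\otimes\omega_{b-t}\otimes1_t)(1_t\otimes X_{b-t,a-t}\otimes1_t)(S_{t,b-t}\otimes S_{a-t,t})$; (R5) $S_{a,b}\omega_{a+b}=(\omega_a\otimes\omega_b)S_{a,b}$, $\omega_{a+b}M_{a,b}=M_{a,b}(\omega_a\otimes\omega_b)$; (R6) $M^{(a)}(\omega_1\otimes\cdots\otimes\omega_1)S^{(a)}=a!\,\omega_a$; (R7) $D_{u,r}U_{r,u}=g_r(u)\otimes1_u$,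 $U_{r,u}D_{u,r}=1_u\otimes g_r(u)$; (R8) $(D_{u,b}\otimes1_a)(1_u\otimes X_{a,b})(U_{a,u}\otimes1_b)=(1_b\otimes U_{a,u})(X_{a,b}\otimes1_u)(1_a\otimes D_{u,b})+\sum_{t=1}^{\min(a,b)}t!\,(M_{t,b-t}\otimes1_u\otimes M_{a-t,t})(1_t\otimes1_{b-t}\otimes U_{a-t,u}\otimes1_t)(1_t\otimes X_{a-t,b-t}\otimes1_u\otimes1_t)(1_t\otimes1_{a-t}\otimes D_{u,b-t}\otimes1_t)(S_{t,a-t}\otimes1_u\otimes S_{b-t,t})$; (R9) $(1_u\otimes S_{b,c})U_{b+c,u}=(U_{b,u}\otimes1_c)(1_b\otimes U_{c,u})(S_{b,c}\otimes1_u)$, $(S_{a,b}\otimes1_u)D_{u,a+b}=(1_a\otimes D_{u,b})(D_{u,a}\otimes1_b)(1_u\otimes S_{a,b})$, $D_{u,b+c}(1_u\otimes M_{b,c})=(M_{b,c}\otimes1_u)(1_b\otimes D_{u,c})(D_{u,b}\otimes1_c)$, $U_{a+b,u}(M_{a,b}\otimes1_u)=(1_u\otimes M_{a,b})(U_{a,u}\otimes1_b)(1_a\otimes U_{b,u})$. The affine web category $\mathcal{AW}$ is the strict $\Bbbk$-linear monoidal category with generating objects the integers $a\ge1$ only, generating morphisms $M_{a,b},S_{a,b},X_{a,b},\omega_a$ ($a,b\ge1$), and defining relations (R1)–(R6). *)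

(* Defs.v *)
(* Morphisms are (untyped) diagram terms with a typing judgement
   [has_type]; the hom-space Hom(s,t) is the set of terms of type s -> t modulo
   the congruence [eqv sch s t] generated by the axioms of a strict k-linear
   monoidal category and the defining relations.  The flag [sch] selects the
   category: [sch = false] is AW (black strands only, relations R1-R6),
   [sch = true] is AS (red strands and traverses allowed, relations R1-R9). *)
From mathcomp Require Import all_boot all_order all_algebra.
Set Implicit Arguments. Unset Strict Implicit. Unset Printing Implicit Defensive.
Import GRing.Theory.
Local Open Scope ring_scope.

(* generating objects: black strands of thickness n (n >= 1), red strands u *)
Inductive lab (R : Type) := Blk of nat | Red of R.
Arguments Blk {R}.

Inductive term (R : Type) :=
| TId of seq (lab R)
| TComp of term R & term R   (* TComp g f = g o f *)
| TTens of term R & term R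
| TZero
| TAdd of term R & term R
| TScal of R & term R
| GM of nat & nat
| GS of nat & nat
| GX of nat & nat
| GW of nat                  (* dot omega_a *)
| GU of nat & R              (* traverse-up U_{a,u} *)
| GD of R & nat.             (* traverse-down D_{u,a} *)
Arguments TZero {R}.
Arguments GM {R}. Arguments GS {R}. Arguments GX {R}. Arguments GW {R}.

Section Presentation.
Variable R : comPzRingType.

Notation obj := (seq (lab R)).
Notation tm := (term R).

Definition valid (sch : bool) (l : lab R) : bool :=
  match l with Blk n => (0 < n)%N | Red _ => sch end.

Inductive has_type (sch : bool) : tm -> obj -> obj -> Prop :=
| ht_id s : all (valid sch) s -> has_type sch (TId s) s s
| ht_comp f g s t u : has_type sch f s t -> has_type sch g t u ->
    has_type sch (TComp g f) s u
| ht_tens f g s t s' t' : has_type sch f s t -> has_type sch g s' t' ->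
    has_type sch (TTens f g) (s ++ s') (t ++ t')
| ht_zero s t : all (valid sch) s -> all (valid sch) t -> has_type sch TZero s t
| ht_add f g s t : has_type sch f s t -> has_type sch g s t ->
    has_type sch (TAdd f g) s t
| ht_scal c f s t : has_type sch f s t -> has_type sch (TScal c f) s t
| ht_M a b : (0 < a)%N -> (0 < b)%N ->
    has_type sch (GM a b) [:: Blk a; Blk b] [:: Blk (a + b)]
| ht_S a b : (0 < a)%N -> (0 < b)%N ->
    has_type sch (GS a b) [:: Blk (a + b)] [:: Blk a; Blk b]
| ht_X a b : (0 < a)%N -> (0 < b)%N ->
    has_type sch (GX a b) [:: Blk a; Blk b] [:: Blk b; Blk a]
| ht_W a : (0 < a)%N -> has_type sch (GW a) [:: Blk a] [:: Blk a]
| ht_U a u : sch -> (0 < a)%N ->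
    has_type sch (GU a u) [:: Blk a; Red u] [:: Red u; Blk a]
| ht_D u a : sch -> (0 < a)%N ->
    has_type sch (GD u a) [:: Red u; Blk a] [:: Blk a; Red u].

Definition bk (a : nat) : obj := if a is 0 then [::] else [:: Blk a].
Definition ru (u : R) : tm := TId [:: Red u].
Definition idb (a : nat) : tm := TId (bk a).
Definition Mg (a b : nat) : tm :=
  if (a == 0)%N || (b == 0)%N then TId (bk (a + b)) else GM a b.
Definition Sp (a b : nat) : tm :=
  if (a == 0)%N || (b == 0)%N then TId (bk (a + b)) else GS a b.
Definition Xc (a b : nat) : tm :=
  if (a == 0)%N || (b == 0)%N then TId (bk a ++ bk b) else GX a b.
Definition Wd (a : nat) : tm := if a is 0 then TId [::] else GW a.
Definition Up (a : nat) (u : R) : tm := if a is 0 then ru u else GU a u.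
Definition Dn (u : R) (a : nat) : tm := if a is 0 then ru u else GD u a.

Definition tsum (l : seq tm) : tm := foldr (@TAdd R) TZero l.
Definition nsc (n : nat) (f : tm) : tm := TScal (n%:R) f.

Definition wAr (a r : nat) : tm :=
  if r == 0%N then idb a
  else if (r <= a)%N then
    TComp (Mg r (a - r)) (TComp (TTens (Wd r) (idb (a - r))) (Sp r (a - r)))
  else TZero.

Fixpoint Sit (a : nat) : tm :=
  if a is a'.+1 then TComp (TTens (idb 1) (Sit a')) (Sp 1 a') else TId [::].
Fixpoint Mit (a : nat) : tm :=
  if a is a'.+1 then TComp (Mg 1 a') (TTens (idb 1) (Mit a')) else TId [::].
Fixpoint Wones (a : nat) : tm :=
  if a is a'.+1 then TTens (GW 1) (Wones a') else TId [::].

Definition gr (r : nat) (u : R) : tm :=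
  tsum [seq TScal ((-1) ^+ i * \prod_(j < i) (u + j%:R)) (wAr r (r - i))
       | i <- iota 0 r.+1].

Definition R2term (a c s t : nat) : tm :=
  TComp (TTens (Mg s (c - t)) (Mg (a - s) t))
   (TComp (TTens (idb s) (TTens (Xc (a - s) (c - t)) (idb t)))
          (TTens (Sp s (a - s)) (Sp (c - t) t))).

Definition R4aterm (a b t : nat) : tm :=
  nsc t`! (TComp (TTens (Mg t (b - t)) (Mg (a - t) t))
   (TComp (TTens (idb t) (TTens (Xc (a - t) (b - t)) (idb t)))
   (TComp (TTens (idb t) (TTens (idb (a - t)) (TTens (Wd (b - t)) (idb t))))
          (TTens (Sp t (a - t)) (Sp (b - t) t))))).

Definition R4bterm (a b t : nat) : tm :=
  nsc t`! (TComp (TTens (Mg t (a - t)) (Mg (b - t) t))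
   (TComp (TTens (idb t) (TTens (idb (a - t)) (TTens (Wd (b - t)) (idb t))))
   (TComp (TTens (idb t) (TTens (Xc (b - t) (a - t)) (idb t)))
          (TTens (Sp t (b - t)) (Sp (a - t) t))))).

Definition R8term (a b : nat) (u : R) (t : nat) : tm :=
  nsc t`! (TComp (TTens (Mg t (b - t)) (TTens (ru u) (Mg (a - t) t)))
   (TComp (TTens (idb t) (TTens (idb (b - t)) (TTens (Up (a - t) u) (idb t))))
   (TComp (TTens (idb t) (TTens (Xc (a - t) (b - t)) (TTens (ru u) (idb t))))
   (TComp (TTens (idb t) (TTens (idb (a - t)) (TTens (Dn u (b - t)) (idb t))))
          (TTens (Sp t (a - t)) (TTens (ru u) (Sp (b - t) t))))))).

(* instances of the defining relations (R1)-(R6), and (R7)-(R9) for AS;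
   [rel_inst sch s t lhs rhs] : lhs = rhs as morphisms s -> t *)
Inductive rel_inst (sch : bool) : obj -> obj -> tm -> tm -> Prop :=
| R1a a b c : (0 < a)%N -> (0 < b)%N -> (0 < c)%N ->
    rel_inst sch (bk a ++ bk b ++ bk c) (bk (a + b + c))
      (TComp (Mg (a + b) c) (TTens (Mg a b) (idb c)))
      (TComp (Mg a (b + c)) (TTens (idb a) (Mg b c)))
| R1b a b c : (0 < a)%N -> (0 < b)%N -> (0 < c)%N ->
    rel_inst sch (bk (a + b + c)) (bk a ++ bk b ++ bk c)
      (TComp (TTens (Sp a b) (idb c)) (Sp (a + b) c))
      (TComp (TTens (idb a) (Sp b c)) (Sp a (b + c)))
| R2 a b c d : (0 < a)%N -> (0 < b)%N -> (0 < c)%N -> (0 < d)%N ->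
    (a + c = b + d)%N ->
    rel_inst sch (bk a ++ bk c) (bk b ++ bk d)
      (TComp (Sp b d) (Mg a c))
      (tsum [seq R2term a c s t | s <- iota 0 (minn a b).+1,
                 t <- [seq t <- iota 0 (minn c d).+1 | (t + a == d + s)%N]])
| R3 a b : (0 < a)%N -> (0 < b)%N ->
    rel_inst sch (bk (a + b)) (bk (a + b))
      (TComp (Mg a b) (Sp a b)) (nsc 'C(a + b, a) (idb (a + b)))
| R4a a b : (0 < a)%N -> (0 < b)%N ->
    rel_inst sch (bk a ++ bk b) (bk b ++ bk a)
      (TComp (TTens (Wd b) (idb a)) (Xc a b))
      (tsum [seq R4aterm a b t | t <- iota 0 (minn a b).+1])
| R4b a b : (0 < a)%N -> (0 < b)%N ->
    rel_inst sch (bk b ++ bk a) (bk a ++ bk b)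
      (TComp (Xc b a) (TTens (Wd b) (idb a)))
      (tsum [seq R4bterm a b t | t <- iota 0 (minn a b).+1])
| R5a a b : (0 < a)%N -> (0 < b)%N ->
    rel_inst sch (bk (a + b)) (bk a ++ bk b)
      (TComp (Sp a b) (Wd (a + b))) (TComp (TTens (Wd a) (Wd b)) (Sp a b))
| R5b a b : (0 < a)%N -> (0 < b)%N ->
    rel_inst sch (bk a ++ bk b) (bk (a + b))
      (TComp (Wd (a + b)) (Mg a b)) (TComp (Mg a b) (TTens (Wd a) (Wd b)))
| R6 a : (0 < a)%N ->
    rel_inst sch (bk a) (bk a)
      (TComp (Mit a) (TComp (Wones a) (Sit a))) (nsc a`! (Wd a))
| R7a r u : sch -> (0 < r)%N ->
    rel_inst sch (bk r ++ [:: Red u]) (bk r ++ [:: Red u])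
      (TComp (Dn u r) (Up r u)) (TTens (gr r u) (ru u))
| R7b r u : sch -> (0 < r)%N ->
    rel_inst sch ([:: Red u] ++ bk r) ([:: Red u] ++ bk r)
      (TComp (Up r u) (Dn u r)) (TTens (ru u) (gr r u))
| R8 a b u : sch -> (0 < a)%N -> (0 < b)%N ->
    rel_inst sch (bk a ++ [:: Red u] ++ bk b) (bk b ++ [:: Red u] ++ bk a)
      (TComp (TTens (Dn u b) (idb a))
         (TComp (TTens (ru u) (Xc a b)) (TTens (Up a u) (idb b))))
      (TAdd (TComp (TTens (idb b) (Up a u))
               (TComp (TTens (Xc a b) (ru u)) (TTens (idb a) (Dn u b))))
            (tsum [seq R8term a b u t | t <- iota 1 (minn a b)]))
| R9a b c u : sch -> (0 < b)%N -> (0 < c)%N ->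
    rel_inst sch (bk (b + c) ++ [:: Red u]) ([:: Red u] ++ bk b ++ bk c)
      (TComp (TTens (ru u) (Sp b c)) (Up (b + c) u))
      (TComp (TTens (Up b u) (idb c))
         (TComp (TTens (idb b) (Up c u)) (TTens (Sp b c) (ru u))))
| R9b a b u : sch -> (0 < a)%N -> (0 < b)%N ->
    rel_inst sch ([:: Red u] ++ bk (a + b)) (bk a ++ bk b ++ [:: Red u])
      (TComp (TTens (Sp a b) (ru u)) (Dn u (a + b)))
      (TComp (TTens (idb a) (Dn u b))
         (TComp (TTens (Dn u a) (idb b)) (TTens (ru u) (Sp a b))))
| R9c b c u : sch -> (0 < b)%N -> (0 < c)%N ->
    rel_inst sch ([:: Red u] ++ bk b ++ bk c) (bk (b + c) ++ [:: Red u])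
      (TComp (Dn u (b + c)) (TTens (ru u) (Mg b c)))
      (TComp (TTens (Mg b c) (ru u))
         (TComp (TTens (idb b) (Dn u c)) (TTens (Dn u b) (idb c))))
| R9d a b u : sch -> (0 < a)%N -> (0 < b)%N ->
    rel_inst sch (bk a ++ bk b ++ [:: Red u]) ([:: Red u] ++ bk (a + b))
      (TComp (Up (a + b) u) (TTens (Mg a b) (ru u)))
      (TComp (TTens (ru u) (Mg a b))
         (TComp (TTens (Up a u) (idb b)) (TTens (idb a) (Up b u)))).

Inductive eqv (sch : bool) : obj -> obj -> tm -> tm -> Prop :=
| eqv_refl f s t : has_type sch f s t -> eqv sch s t f f
| eqv_sym f g s t : eqv sch s t f g -> eqv sch s t g f
| eqv_trans f g h s t : eqv sch s t f g -> eqv sch s t g h -> eqv sch s t f h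
| eqv_comp f f' g g' s t u : eqv sch s t f f' -> eqv sch t u g g' ->
    eqv sch s u (TComp g f) (TComp g' f')
| eqv_tens f f' g g' s t s' t' : eqv sch s t f f' -> eqv sch s' t' g g' ->
    eqv sch (s ++ s') (t ++ t') (TTens f g) (TTens f' g')
| eqv_add f f' g g' s t : eqv sch s t f f' -> eqv sch s t g g' ->
    eqv sch s t (TAdd f g) (TAdd f' g')
| eqv_scal c f f' s t : eqv sch s t f f' -> eqv sch s t (TScal c f) (TScal c f')
| eqv_compA f g h s t u v : has_type sch f s t -> has_type sch g t u ->
    has_type sch h u v ->
    eqv sch s v (TComp h (TComp g f)) (TComp (TComp h g) f)
| eqv_id_l f s t : has_type sch f s t -> eqv sch s t (TComp (TId t) f) f
| eqv_id_r f s t : has_type sch f s t -> eqv sch s t (TComp f (TId s)) f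
| eqv_tensA f g h s1 t1 s2 t2 s3 t3 : has_type sch f s1 t1 ->
    has_type sch g s2 t2 -> has_type sch h s3 t3 ->
    eqv sch (s1 ++ s2 ++ s3) (t1 ++ t2 ++ t3)
      (TTens (TTens f g) h) (TTens f (TTens g h))
| eqv_tens1l f s t : has_type sch f s t -> eqv sch s t (TTens (TId [::]) f) f
| eqv_tens1r f s t : has_type sch f s t -> eqv sch s t (TTens f (TId [::])) f
| eqv_tensId s s' : all (valid sch) s -> all (valid sch) s' ->
    eqv sch (s ++ s') (s ++ s') (TTens (TId s) (TId s')) (TId (s ++ s'))
| eqv_interchange f f' g g' s t u s' t' u' :
    has_type sch f s t -> has_type sch g t u ->
    has_type sch f' s' t' -> has_type sch g' t' u' ->
    eqv sch (s ++ s') (u ++ u')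
      (TComp (TTens g g') (TTens f f')) (TTens (TComp g f) (TComp g' f'))
| eqv_addA f g h s t : has_type sch f s t -> has_type sch g s t ->
    has_type sch h s t ->
    eqv sch s t (TAdd f (TAdd g h)) (TAdd (TAdd f g) h)
| eqv_addC f g s t : has_type sch f s t -> has_type sch g s t ->
    eqv sch s t (TAdd f g) (TAdd g f)
| eqv_add0 f s t : has_type sch f s t -> eqv sch s t (TAdd TZero f) f
| eqv_scal1 f s t : has_type sch f s t -> eqv sch s t (TScal 1 f) f
| eqv_scalA c d f s t : has_type sch f s t ->
    eqv sch s t (TScal c (TScal d f)) (TScal (c * d) f)
| eqv_scalDl c d f s t : has_type sch f s t ->
    eqv sch s t (TScal (c + d) f) (TAdd (TScal c f) (TScal d f))
| eqv_scalDr c f g s t : has_type sch f s t -> has_type sch g s t ->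
    eqv sch s t (TScal c (TAdd f g)) (TAdd (TScal c f) (TScal c g))
| eqv_scal0 f s t : has_type sch f s t -> eqv sch s t (TScal 0 f) TZero
| eqv_compDl f g g' s t u : has_type sch f s t -> has_type sch g t u ->
    has_type sch g' t u ->
    eqv sch s u (TComp (TAdd g g') f) (TAdd (TComp g f) (TComp g' f))
| eqv_compDr f f' g s t u : has_type sch f s t -> has_type sch f' s t ->
    has_type sch g t u ->
    eqv sch s u (TComp g (TAdd f f')) (TAdd (TComp g f) (TComp g f'))
| eqv_compZl c f g s t u : has_type sch f s t -> has_type sch g t u ->
    eqv sch s u (TComp (TScal c g) f) (TScal c (TComp g f))
| eqv_compZr c f g s t u : has_type sch f s t -> has_type sch g t u ->
    eqv sch s u (TComp g (TScal c f)) (TScal c (TComp g f))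
| eqv_tensDl f f' g s t s' t' : has_type sch f s t -> has_type sch f' s t ->
    has_type sch g s' t' ->
    eqv sch (s ++ s') (t ++ t') (TTens (TAdd f f') g)
      (TAdd (TTens f g) (TTens f' g))
| eqv_tensDr f g g' s t s' t' : has_type sch f s t -> has_type sch g s' t' ->
    has_type sch g' s' t' ->
    eqv sch (s ++ s') (t ++ t') (TTens f (TAdd g g'))
      (TAdd (TTens f g) (TTens f g'))
| eqv_tensZl c f g s t s' t' : has_type sch f s t -> has_type sch g s' t' ->
    eqv sch (s ++ s') (t ++ t') (TTens (TScal c f) g) (TScal c (TTens f g))
| eqv_tensZr c f g s t s' t' : has_type sch f s t -> has_type sch g s' t' ->
    eqv sch (s ++ s') (t ++ t') (TTens f (TScal c g)) (TScal c (TTens f g))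
| eqv_rel f g s t : rel_inst sch s t f g -> has_type sch f s t ->
    has_type sch g s t -> eqv sch s t f g.

End Presentation.

(* Main.v *)
Require Import Defs.
From mathcomp Require Import all_boot all_order all_algebra.
Set Implicit Arguments. Unset Strict Implicit. Unset Printing Implicit Defensive.
Import GRing.Theory.
Local Open Scope ring_scope.

Section Proof.
Variable R : comPzRingType.
Notation tm := (term R).
Notation obj := (seq (lab R)).

Definition isRed (l : lab R) : bool := if l is Red _ then true else false.
Definition cnt (s : obj) : nat := count isRed s.

Fixpoint Z (h : tm) : bool :=
  match h with
  | TZero => true
  | TComp g f => Z g || Z f
  | TTens f g => Z f || Z g
  | TAdd f g => Z f && Z g
  | TScal _ f => Z f
  | _ => false
  end.

Fixpoint tr (h : tm) : tm :=
  match h with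
  | TComp g f => if Z g || Z f then TZero else TComp (tr g) (tr f)
  | TTens f g => TTens (tr f) (tr g)
  | TAdd f g => TAdd (tr f) (tr g)
  | TScal c f => TScal c (tr f)
  | GU _ _ => TZero
  | GD _ _ => TZero
  | _ => h
  end.

Fixpoint clean (h : tm) : bool :=
  match h with
  | TComp g f => ~~ Z g && ~~ Z f && clean g && clean f
  | TTens f g => clean f && clean g
  | TAdd f g => clean f && clean g
  | TScal _ f => clean f
  | GU _ _ => false
  | GD _ _ => false
  | _ => true
  end.

Lemma clean_tr h : clean h -> tr h = h.
Proof.
elim: h => //=.
- move=> g IHg f IHf /andP[/andP[/andP[/negbTE -> /negbTE ->] cg] cf].
  by rewrite IHg // IHf.
- by move=> f IHf g IHg /andP[cf cg]; rewrite IHf // IHg.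
- by move=> f IHf g IHg /andP[cf cg]; rewrite IHf // IHg.
- by move=> c f IHf cf; rewrite IHf.
Qed.

Lemma Ztr h : Z h -> Z (tr h).
Proof.
elim: h => //=.
- by move=> g IHg f IHf ->.
- by move=> f IHf g IHg /orP[/IHf ->|/IHg ->]; rewrite ?orbT.
- by move=> f IHf g IHg /andP[/IHf -> /IHg ->].
Qed.

Lemma valid_mono sch (s : obj) : all (valid false) s -> all (valid sch) s.
Proof. by apply: sub_all => -[]. Qed.

Lemma black_cnt sch (s : obj) : all (valid sch) s -> cnt s = 0%N -> all (valid false) s.
Proof. by elim: s => //= -[n|u] s IH /andP[h1 h2] //= /(IH h2) ->; rewrite andbT. Qed.

Lemma cnt_black (s : obj) : all (valid false) s -> cnt s = 0%N.
Proof. by elim: s => //= -[n|u] s IH //= /andP[_ /IH]. Qed.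

Lemma ht_valid sch (f : tm) (s t : obj) : has_type sch f s t -> all (valid sch) s && all (valid sch) t.
Proof.
elim=> //=; intros; rewrite ?addn_gt0 ?all_cat;
repeat match goal with H : is_true (_ && _) |- _ => case/andP: H => ?? 
  | H : is_true _ |- _ => try rewrite H /=; clear H end; by [].
Qed.


Lemma ht_Z sch (f : tm) (s t : obj) : has_type sch f s t -> cnt s != cnt t -> Z f.
Proof.
elim=> //=; try by intros; match goal with H: is_true (_ != _) |- _ => by rewrite /cnt /= ?eqxx in H end.
- move=> f0 g s0 t0 u _ IHf _ IHg ne.
  case: (eqVneq (cnt s0) (cnt t0)) => [e|/IHf ->]; last by rewrite orbT.
  by rewrite IHg // -e.
- move=> f0 g s0 t0 s1 t1 _ IHf _ IHg; rewrite /cnt !count_cat.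
  case: (eqVneq (count isRed s0) (count isRed t0)) => [e|/IHf -> //].
  case: (eqVneq (count isRed s1) (count isRed t1)) => [e'|/IHg ->]; last by rewrite orbT.
  by rewrite e e' eqxx.
- by move=> ???? _ IHf _ IHg ne; rewrite IHf // IHg.
Qed.

Lemma ht_valid_s sch (f : tm) (s t : obj) : has_type sch f s t -> all (valid sch) s.
Proof. by move/ht_valid/andP=> []. Qed.
Lemma ht_valid_t sch (f : tm) (s t : obj) : has_type sch f s t -> all (valid sch) t.
Proof. by move/ht_valid/andP=> []. Qed.

Lemma ht_zero' sch (f : tm) (s t : obj) : has_type sch f s t -> has_type sch TZero s t.
Proof. by move=> h; apply: ht_zero; [apply: ht_valid_s h|apply: ht_valid_t h]. Qed.

Lemma eqv_zero_scal sch (s t : obj) : all (valid sch) s -> all (valid sch) t ->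
  eqv sch s t (TScal 0 TZero) TZero.
Proof. by move=> hs ht; apply: eqv_scal0; apply: ht_zero. Qed.

Lemma comp0r sch (g : tm) (s t u : obj) : all (valid sch) s -> has_type sch g t u ->
  eqv sch s u (TComp g TZero) TZero.
Proof.
move=> hs hg; have ht := ht_valid_s hg; have hu := ht_valid_t hg.
have hz : has_type sch (@TZero R) s t by apply: ht_zero.
apply: eqv_trans (_ : eqv _ _ _ _ (TComp g (TScal 0 TZero))) _.
  apply: (eqv_comp (t:=t)); [apply: eqv_sym; exact: eqv_zero_scal|exact: eqv_refl].
apply: eqv_trans; first exact: (eqv_compZr _ hz hg).
by apply: eqv_scal0; apply: ht_comp hg.
Qed.

Lemma comp0l sch (f : tm) (s t u : obj) : all (valid sch) u -> has_type sch f s t ->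
  eqv sch s u (TComp TZero f) TZero.
Proof.
move=> hu hf; have hs := ht_valid_s hf; have ht := ht_valid_t hf.
have hz : has_type sch (@TZero R) t u by apply: ht_zero.
apply: eqv_trans (_ : eqv _ _ _ _ (TComp (TScal 0 TZero) f)) _.
  apply: (eqv_comp (t:=t)); [exact: eqv_refl|apply: eqv_sym; exact: eqv_zero_scal].
apply: eqv_trans; first exact: (eqv_compZl _ hf hz).
by apply: eqv_scal0; apply: ht_comp hz.
Qed.

Lemma tens0l sch (g : tm) (s t s' t' : obj) : all (valid sch) s -> all (valid sch) t ->
  has_type sch g s' t' -> eqv sch (s ++ s') (t ++ t') (TTens TZero g) TZero.
Proof.
move=> hs ht hg.
have hz : has_type sch (@TZero R) s t by apply: ht_zero.
apply: eqv_trans (_ : eqv _ _ _ _ (TTens (TScal 0 TZero) g)) _.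
  apply: eqv_tens; [apply: eqv_sym; exact: eqv_zero_scal|exact: eqv_refl].
apply: eqv_trans; first exact: (eqv_tensZl _ hz hg).
by apply: eqv_scal0; apply: ht_tens hg.
Qed.

Lemma tens0r sch (f : tm) (s t s' t' : obj) : all (valid sch) s' -> all (valid sch) t' ->
  has_type sch f s t -> eqv sch (s ++ s') (t ++ t') (TTens f TZero) TZero.
Proof.
move=> hs ht hf.
have hz : has_type sch (@TZero R) s' t' by apply: ht_zero.
apply: eqv_trans (_ : eqv _ _ _ _ (TTens f (TScal 0 TZero))) _.
  apply: eqv_tens; [exact: eqv_refl|apply: eqv_sym; exact: eqv_zero_scal].
apply: eqv_trans; first exact: (eqv_tensZr _ hf hz).
by apply: eqv_scal0; apply: ht_tens hz.
Qed.

Lemma Z_eqv sch (f : tm) (s t : obj) : has_type sch f s t -> Z f -> eqv sch s t f TZero.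
Proof.
elim=> //=.
- move=> f0 g s0 t0 u hf IHf hg IHg /orP[zg|zf].
    apply: eqv_trans (_ : eqv _ _ _ _ (TComp TZero f0)) _.
      by apply: (eqv_comp (t:=t0)); [apply: eqv_refl|apply: IHg].
    by apply: comp0l hf; apply: ht_valid_t hg.
  apply: eqv_trans (_ : eqv _ _ _ _ (TComp g TZero)) _.
    by apply: (eqv_comp (t:=t0)); [apply: IHf|apply: eqv_refl].
  by apply: comp0r hg; apply: ht_valid_s hf.
- move=> f0 g s0 t0 s1 t1 hf IHf hg IHg /orP[zf|zg].
    apply: eqv_trans (_ : eqv _ _ _ _ (TTens TZero g)) _.
      by apply: eqv_tens; [apply: IHf|apply: eqv_refl].
    by apply: tens0l hg; [apply: ht_valid_s hf|apply: ht_valid_t hf].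
  apply: eqv_trans (_ : eqv _ _ _ _ (TTens f0 TZero)) _.
    by apply: eqv_tens; [apply: eqv_refl|apply: IHg].
  by apply: tens0r hf; [apply: ht_valid_s hg|apply: ht_valid_t hg].
- by move=> s0 t0 hs ht _; apply: eqv_refl; apply: ht_zero.
- move=> f0 g s0 t0 hf IHf hg IHg /andP[zf zg].
  apply: eqv_trans (_ : eqv _ _ _ _ (TAdd TZero TZero)) _.
    by apply: eqv_add; [apply: IHf|apply: IHg].
  by apply: eqv_add0; apply: ht_zero' hf.
- move=> c f0 s0 t0 hf IHf zf.
  have hz := ht_zero' hf.
  apply: eqv_trans (_ : eqv _ _ _ _ (TScal c (TScal 0 TZero))) _.
    apply: eqv_scal; apply: eqv_trans (IHf zf) _; apply: eqv_sym.
    by apply: eqv_scal0.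
  apply: eqv_trans; first exact: (eqv_scalA _ _ hz).
  by rewrite mulr0; apply: eqv_scal0.
Qed.

Lemma ht_mono (f : tm) (s t : obj) : has_type false f s t -> has_type true f s t.
Proof.
elim; intros; try by [].
all: try (econstructor; eauto; apply: valid_mono; eauto).
all: econstructor; eauto.
Qed.

Lemma rel_mono (f g : tm) (s t : obj) : rel_inst false s t f g -> rel_inst true s t f g.
Proof. by case; intros; try by []; constructor. Qed.

Lemma eqv_mono (f g : tm) (s t : obj) : eqv false s t f g -> eqv true s t f g.
Proof.
elim; intros;
[ eapply eqv_refl | eapply eqv_sym | eapply eqv_trans | eapply eqv_comp | eapply eqv_tens
| eapply eqv_add | eapply eqv_scal | eapply eqv_compA | eapply eqv_id_l | eapply eqv_id_r
| eapply eqv_tensA | eapply eqv_tens1l | eapply eqv_tens1r | eapply eqv_tensId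
| eapply eqv_interchange | eapply eqv_addA | eapply eqv_addC | eapply eqv_add0
| eapply eqv_scal1 | eapply eqv_scalA | eapply eqv_scalDl | eapply eqv_scalDr
| eapply eqv_scal0 | eapply eqv_compDl | eapply eqv_compDr | eapply eqv_compZl
| eapply eqv_compZr | eapply eqv_tensDl | eapply eqv_tensDr | eapply eqv_tensZl
| eapply eqv_tensZr | eapply eqv_rel ];
eauto using ht_mono, valid_mono, rel_mono.
Qed.

Lemma eqv_ht sch (f g : tm) (s t : obj) : eqv sch s t f g ->
  has_type sch f s t /\ has_type sch g s t.
Proof.
elim; intros; repeat match goal with H: _ /\ _ |- _ => destruct H end; split;
  try solve [repeat (first [eassumption | eapply ht_comp | eapply ht_tens | eapply ht_add
    | eapply ht_scal | apply: ht_zero'; eassumption])].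
- apply: ht_comp; [eassumption|apply: ht_id; apply: ht_valid_t; eassumption].
- apply: ht_comp; [apply: ht_id; apply: ht_valid_s; eassumption|eassumption].
- rewrite !catA; do 2 apply: ht_tens => //.
- by apply: (ht_tens (s:=[::]) (t:=[::])) => //; apply: ht_id.
- rewrite -[s0]cats0 -[t0]cats0; apply: ht_tens => //; exact: ht_id.
- by apply: ht_tens; apply: ht_id.
- by apply: ht_id; rewrite all_cat; apply/andP.
Qed.

Definition black (s : obj) := all (valid false) s.

Lemma midZ sch (f : tm) (s t : obj) : has_type sch f s t -> black s -> ~~ black t -> Z f.
Proof.
move=> hf bs nbt; apply: (ht_Z hf); rewrite (cnt_black bs).
apply/eqP=> e; move: nbt; rewrite /black (black_cnt (ht_valid_t hf)) //.
Qed.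

Lemma midZ' sch (f : tm) (s t : obj) : has_type sch f s t -> black t -> ~~ black s -> Z f.
Proof.
move=> hf bt nbs; apply: (ht_Z hf); rewrite (cnt_black bt).
apply/eqP=> e; move: nbs; rewrite /black (black_cnt (ht_valid_s hf)) //.
Qed.

Lemma blackC (s t : obj) : black (s ++ t) = black s && black t.
Proof. by rewrite /black all_cat. Qed.

Lemma trA sch (h : tm) (s t : obj) : has_type sch h s t -> black s -> black t ->
  has_type false (tr h) s t.
Proof.
elim=> /=.
- by move=> s0 _ bs _; apply: ht_id.
- move=> f g s0 t0 u hf IHf hg IHg bs bu.
  case: ifP => [_|/norP[ng nf]]; first by apply: ht_zero.
  have bt : black t0 by apply/negPn/negP => nbt; move: nf; rewrite (midZ hf bs nbt).
  by apply: ht_comp; [apply: IHf|apply: IHg].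
- move=> f g s0 t0 s1 t1 hf IHf hg IHg; rewrite !blackC => /andP[b1 b2] /andP[b3 b4].
  by apply: ht_tens; [apply: IHf|apply: IHg].
- by move=> s0 t0 _ _ b1 b2; apply: ht_zero.
- by move=> f g s0 t0 hf IHf hg IHg b1 b2; apply: ht_add; [apply: IHf|apply: IHg].
- by move=> c f s0 t0 hf IHf b1 b2; apply: ht_scal; apply: IHf.
- by move=> a b *; apply: ht_M.
- by move=> a b *; apply: ht_S.
- by move=> a b *; apply: ht_X.
- by move=> a *; apply: ht_W.
- by move=> a u _ _; rewrite /black /= andbF.
- by move=> u a _ _; rewrite /black /= andbF.
Qed.

Lemma trB sch (h : tm) (s t : obj) : has_type sch h s t -> black s -> black t ->
  eqv sch s t (tr h) h.
Proof.
move=> H; elim: H => /=.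
- by move=> s0 h0 _ _; apply: eqv_refl; apply: ht_id.
- move=> f g s0 t0 u hf IHf hg IHg bs bu.
  case: ifP => [zz|/norP[ng nf]].
    by apply: eqv_sym; apply: Z_eqv => //; apply: ht_comp hg.
  have bt : black t0 by apply/negPn/negP => nbt; move: nf; rewrite (midZ hf bs nbt).
  by apply: (eqv_comp (t:=t0)); [apply: IHf|apply: IHg].
- move=> f g s0 t0 s1 t1 hf IHf hg IHg; rewrite !blackC => /andP[b1 b2] /andP[b3 b4].
  by apply: eqv_tens; [apply: IHf|apply: IHg].
- by move=> s0 t0 h1 h2 b1 b2; apply: eqv_refl; apply: ht_zero.
- by move=> f g s0 t0 hf IHf hg IHg b1 b2; apply: eqv_add; [apply: IHf|apply: IHg].
- by move=> c f s0 t0 hf IHf b1 b2; apply: eqv_scal; apply: IHf.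
- by move=> a b *; apply: eqv_refl; apply: ht_M.
- by move=> a b *; apply: eqv_refl; apply: ht_S.
- by move=> a b *; apply: eqv_refl; apply: ht_X.
- by move=> a *; apply: eqv_refl; apply: ht_W.
- by move=> a u _ _; rewrite /black /= andbF.
- by move=> u a _ _; rewrite /black /= andbF.
Qed.

Lemma comp_trA (f g : tm) (s t u : obj) : has_type true f s t -> has_type true g t u ->
  black s -> black t -> black u ->
  eqv false s u (tr (TComp g f)) (TComp (tr g) (tr f)).
Proof.
move=> hf hg bs bt bu.
have hf' := trA hf bs bt; have hg' := trA hg bt bu.
rewrite {1}/tr -/tr; case: ifP => [zz|_]; last by apply: eqv_refl; apply: ht_comp hg'.
apply: eqv_sym; apply: Z_eqv; first by apply: ht_comp hg'.
by rewrite /=; case/orP: zz => /Ztr ->; rewrite ?orbT.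
Qed.

Lemma ZMg a b : Z (@Mg R a b) = false. Proof. by rewrite /Mg; case: ifP. Qed.
Lemma ZSp a b : Z (@Sp R a b) = false. Proof. by rewrite /Sp; case: ifP. Qed.
Lemma ZXc a b : Z (@Xc R a b) = false. Proof. by rewrite /Xc; case: ifP. Qed.
Lemma ZWd a : Z (@Wd R a) = false. Proof. by case: a. Qed.
Lemma Zidb a : Z (@idb R a) = false. Proof. by []. Qed.
Lemma cMg a b : clean (@Mg R a b). Proof. by rewrite /Mg; case: ifP. Qed.
Lemma cSp a b : clean (@Sp R a b). Proof. by rewrite /Sp; case: ifP. Qed.
Lemma cXc a b : clean (@Xc R a b). Proof. by rewrite /Xc; case: ifP. Qed.
Lemma cWd a : clean (@Wd R a). Proof. by case: a. Qed.
Lemma cidb a : clean (@idb R a). Proof. by []. Qed.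

Lemma ZMit a : Z (@Mit R a) = false.
Proof. by elim: a => //= a ->; rewrite ZMg. Qed.
Lemma ZSit a : Z (@Sit R a) = false.
Proof. by elim: a => //= a ->; rewrite ZSp. Qed.
Lemma ZWones a : Z (@Wones R a) = false.
Proof. by elim: a. Qed.
Lemma cMit a : clean (@Mit R a).
Proof. by elim: a => //= a ->; rewrite ZMg ZMit cMg. Qed.
Lemma cSit a : clean (@Sit R a).
Proof. by elim: a => //= a ->; rewrite ZSp ZSit cSp. Qed.
Lemma cWones a : clean (@Wones R a).
Proof. by elim: a. Qed.

Lemma ctsum (l : seq tm) : clean (tsum l) = all clean l.
Proof. by elim: l => //= x l ->. Qed.

Lemma all_pairs (T1 T2 : Type) (l1 : seq T1) (l2 : T1 -> seq T2) (F : T1 -> T2 -> tm) :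
  (forall x y, clean (F x y)) -> all clean [seq F x y | x <- l1, y <- l2 x].
Proof.
move=> H; elim: l1 => //= x l1 IH; rewrite all_cat IH andbT.
by elim: (l2 x) => //= y l ->; rewrite H.
Qed.

Lemma all_map1 (T1 : Type) (l1 : seq T1) (F : T1 -> tm) :
  (forall x, clean (F x)) -> all clean [seq F x | x <- l1].
Proof. by move=> H; elim: l1 => //= y l ->; rewrite H. Qed.

Definition simpZ := (ZMg, ZSp, ZXc, ZWd, Zidb, ZMit, ZSit, ZWones, cMg, cSp, cXc, cWd, cidb,
  cMit, cSit, cWones).

Lemma rel_black (f g : tm) (s t : obj) : rel_inst true s t f g -> black s ->
  [/\ rel_inst false s t f g, clean f & clean g].
Proof.
case; intros; try (by move: H; rewrite /black !all_cat /= ?andbF).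
all: split; try (by constructor).
all: try (by rewrite ctsum; apply: all_pairs => x y; rewrite /R2term /= ?simpZ).
all: try (by rewrite ctsum; apply: all_map1 => x; rewrite /R4aterm /R4bterm /= ?simpZ).
all: rewrite /= ?simpZ //=.
Qed.

Ltac tA := match goal with |- has_type false (tr ?h) ?s ?t =>
  match goal with H : has_type _ h s t |- _ =>
    exact: (trA H ltac:(assumption) ltac:(assumption)) end end.

Lemma trC (f g : tm) (s t : obj) : eqv true s t f g -> black s -> black t ->
  eqv false s t (tr f) (tr g).
Proof.
move=> H; elim: H.
- by move=> f0 s0 t0 hf bs bt; apply: eqv_refl; apply: trA hf bs bt.
- by move=> f0 g0 s0 t0 _ IH bs bt; apply: eqv_sym; apply: IH.
- by move=> f0 g0 h s0 t0 _ IH1 _ IH2 bs bt; apply: eqv_trans (IH1 bs bt) (IH2 bs bt).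
- move=> f0 f' g0 g' s0 t0 u Hf IHf Hg IHg bs bu.
  have [hf hf'] := eqv_ht Hf; have [hg hg'] := eqv_ht Hg.
  case bt: (black t0).
    apply: eqv_trans (comp_trA hf hg bs bt bu) _.
    apply: eqv_trans (eqv_sym (comp_trA hf' hg' bs bt bu)).
    by apply: (eqv_comp (t:=t0)); [apply: IHf|apply: IHg].
  have zf := midZ hf bs (negbT bt); have zf' := midZ hf' bs (negbT bt).
  by rewrite /= zf zf' !orbT; apply: eqv_refl; apply: ht_zero.
- move=> f0 f' g0 g' s0 t0 s' t' _ IHf _ IHg.
  rewrite !blackC => /andP[b1 b2] /andP[b3 b4] /=.
  by apply: eqv_tens; [apply: IHf|apply: IHg].
- by move=> f0 f' g0 g' s0 t0 _ IHf _ IHg bs bt /=; apply: eqv_add; [apply: IHf|apply: IHg].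
- by move=> c f0 f' s0 t0 _ IH bs bt /=; apply: eqv_scal; apply: IH.
- move=> f0 g0 h s0 t0 u v hf hg hh bs bv.
  case bt: (black t0); last first.
    have zf := midZ hf bs (negbT bt).
    by rewrite /= zf !orbT; apply: eqv_refl; apply: ht_zero.
  case bu: (black u); last first.
    have zh := midZ' hh bv (negbT bu).
    by rewrite /= zh /=; apply: eqv_refl; apply: ht_zero.
  have hgf := ht_comp hf hg; have hhg := ht_comp hg hh.
  apply: eqv_trans (comp_trA hgf hh bs bu bv) _.
  apply: eqv_trans (eqv_comp (comp_trA hf hg bs bt bu) (eqv_refl (trA hh bu bv))) _.
  apply: eqv_trans (eqv_compA (trA hf bs bt) (trA hg bt bu) (trA hh bu bv)) _.
  apply: eqv_sym; apply: eqv_trans (comp_trA hf hhg bs bt bv) _.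
  exact: (eqv_comp (eqv_refl (trA hf bs bt)) (comp_trA hg hh bt bu bv)).
- move=> f0 s0 t0 hf bs bt.
  have hid : has_type true (TId t0) t0 t0 by apply: ht_id; apply: valid_mono.
  apply: eqv_trans (comp_trA hf hid bs bt bt) _.
  exact: (eqv_id_l (trA hf bs bt)).
- move=> f0 s0 t0 hf bs bt.
  have hid : has_type true (TId s0) s0 s0 by apply: ht_id; apply: valid_mono.
  apply: eqv_trans (comp_trA hid hf bs bs bt) _.
  exact: (eqv_id_r (trA hf bs bt)).
- move=> f0 g0 h s1 t1 s2 t2 s3 t3 hf hg hh.
  rewrite !blackC => /and3P[b1 b2 b3] /and3P[c1 c2 c3] /=.
  by apply: eqv_tensA; [exact: (trA hf b1 c1)|exact: (trA hg b2 c2)|exact: (trA hh b3 c3)].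
- by move=> f0 s0 t0 hf bs bt /=; apply: eqv_tens1l; tA.
- by move=> f0 s0 t0 hf bs bt /=; apply: eqv_tens1r; tA.
- by move=> s0 s' _ _; rewrite !blackC => /andP[b1 b2] _ /=; apply: eqv_tensId.
- move=> f0 f' g0 g' s0 t0 u s' t' u' hf hg hf' hg'.
  rewrite !blackC => /andP[bs bs'] /andP[bu bu'].
  case bt: (black t0); last first.
    have zf := midZ hf bs (negbT bt).
    rewrite /= zf ?orbT /=; apply: eqv_sym.
    exact: (tens0l bs bu (trA (ht_comp hf' hg') bs' bu')).
  case bt': (black t'); last first.
    have zf := midZ hf' bs' (negbT bt').
    rewrite /= zf ?orbT /=; apply: eqv_sym.
    exact: (tens0r bs' bu' (trA (ht_comp hf hg) bs bu)).
  have bss : black (s0 ++ s') by rewrite blackC bs bs'.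
  have btt : black (t0 ++ t') by rewrite blackC bt bt'.
  have buu : black (u ++ u') by rewrite blackC bu bu'.
  apply: eqv_trans (comp_trA (ht_tens hf hf') (ht_tens hg hg') bss btt buu) _.
  apply: eqv_trans (eqv_interchange (trA hf bs bt) (trA hg bt bu) (trA hf' bs' bt') (trA hg' bt' bu')) _.
  exact: (eqv_tens (eqv_sym (comp_trA hf hg bs bt bu)) (eqv_sym (comp_trA hf' hg' bs' bt' bu'))).
- by intros; simpl; apply: eqv_addA; tA.
- by intros; simpl; apply: eqv_addC; tA.
- by intros; simpl; apply: eqv_add0; tA.
- by intros; simpl; apply: eqv_scal1; tA.
- by intros; simpl; apply: eqv_scalA; tA.
- by intros; simpl; apply: eqv_scalDl; tA.
- by intros; simpl; apply: eqv_scalDr; tA.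
- by intros; simpl; apply: eqv_scal0; tA.
- move=> f0 g0 g' s0 t0 u hf hg hg' bs bu.
  case bt: (black t0); last first.
    have zf := midZ hf bs (negbT bt).
    rewrite /= zf ?orbT /=; apply: eqv_sym; apply: eqv_add0; exact: ht_zero.
  apply: eqv_trans (comp_trA hf (ht_add hg hg') bs bt bu) _.
  apply: eqv_trans (eqv_compDl (trA hf bs bt) (trA hg bt bu) (trA hg' bt bu)) _.
  exact: (eqv_add (eqv_sym (comp_trA hf hg bs bt bu)) (eqv_sym (comp_trA hf hg' bs bt bu))).
- move=> f0 f' g0 s0 t0 u hf hf' hg bs bu.
  case bt: (black t0); last first.
    have zf := midZ hf bs (negbT bt); have zf' := midZ hf' bs (negbT bt).
    rewrite /= zf zf' ?orbT /=; apply: eqv_sym; apply: eqv_add0; exact: ht_zero.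
  apply: eqv_trans (comp_trA (ht_add hf hf') hg bs bt bu) _.
  apply: eqv_trans (eqv_compDr (trA hf bs bt) (trA hf' bs bt) (trA hg bt bu)) _.
  exact: (eqv_add (eqv_sym (comp_trA hf hg bs bt bu)) (eqv_sym (comp_trA hf' hg bs bt bu))).
- move=> c f0 g0 s0 t0 u hf hg bs bu.
  case bt: (black t0); last first.
    have zf := midZ hf bs (negbT bt).
    rewrite /= zf ?orbT /=; apply: eqv_sym; apply: Z_eqv => //.
    by apply: ht_scal; apply: ht_zero.
  apply: eqv_trans (comp_trA hf (ht_scal c hg) bs bt bu) _.
  apply: eqv_trans (eqv_compZl c (trA hf bs bt) (trA hg bt bu)) _.
  exact: (eqv_scal c (eqv_sym (comp_trA hf hg bs bt bu))).
- move=> c f0 g0 s0 t0 u hf hg bs bu.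
  case bt: (black t0); last first.
    have zf := midZ hf bs (negbT bt).
    rewrite /= zf ?orbT /=; apply: eqv_sym; apply: Z_eqv => //.
    by apply: ht_scal; apply: ht_zero.
  apply: eqv_trans (comp_trA (ht_scal c hf) hg bs bt bu) _.
  apply: eqv_trans (eqv_compZr c (trA hf bs bt) (trA hg bt bu)) _.
  exact: (eqv_scal c (eqv_sym (comp_trA hf hg bs bt bu))).
- by intros ??????????; rewrite !blackC => /andP[??] /andP[??] /=; apply: eqv_tensDl; tA.
- by intros ??????????; rewrite !blackC => /andP[??] /andP[??] /=; apply: eqv_tensDr; tA.
- by intros ?????????; rewrite !blackC => /andP[??] /andP[??] /=; apply: eqv_tensZl; tA.
- by intros ?????????; rewrite !blackC => /andP[??] /andP[??] /=; apply: eqv_tensZr; tA.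
- move=> f0 g0 s0 t0 hr hf hg bs bt.
  case: (rel_black hr bs) => hr' cf cg.
  rewrite !clean_tr //; apply: eqv_rel hr' _ _.
    by rewrite -(clean_tr cf); apply: trA hf bs bt.
  by rewrite -(clean_tr cg); apply: trA hg bs bt.
Qed.
End Proof.

Theorem corollary3p16 (R : comPzRingType) :
  [/\ (forall (s t : seq (lab R)) (f g : term R),
         eqv false s t f g -> eqv true s t f g),
      (forall (s t : seq (lab R)) (f g : term R),
         has_type false f s t -> has_type false g s t ->
         eqv true s t f g -> eqv false s t f g)
    & (forall (s t : seq (lab R)) (h : term R),
         all (valid false) s -> all (valid false) t -> has_type true h s t ->
         exists2 f : term R, has_type false f s t & eqv true s t f h)].
Proof.
split.
- by move=> s t f g; apply: eqv_mono.
- move=> s t f g hf hg e.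
  have bs : black s := ht_valid_s hf.
  have bt : black t := ht_valid_t hf.
  apply: eqv_trans (eqv_sym (trB hf bs bt)) _.
  apply: eqv_trans (trC e bs bt) _.
  exact: (trB hg bs bt).
- move=> s t h bs bt hh.
  exists (tr h); first exact: (trA hh bs bt).
  exact: (trB hh bs bt).
Qed.
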